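(* Let $T$ be a tree on $t$ vertices. Then for every positive integer $n$, $\mathrm{ex}^*(n,T,2)\leq 2tn$; that is, every $n$-vertex graph containing no copy of $C_4=K_{2,2}$ as a subgraph and no induced copy of $T$ has at most $2tn$ edges.
   Context: For a graph $H$ and integers $n,s\geq 1$, $\mathrm{ex}^*(n,H,s)$ denotes the maximum number of edges in an $n$-vertex graph which contains no copy of $K_{s,s}$ as a (not necessarily induced) subgraph and contains no induced copy of $H$. *)

(* Defs.v *)
From mathcomp Require Import all_boot.
Set Implicit Arguments. Unset Strict Implicit. Unset Printing Implicit Defensive.

Definition simple_graph (V : finType) (e : rel V) : Prop :=
  symmetric e /\ irreflexive e.

Definition edge_set (V : finType) (e : rel V) : {set {set V}} :=
  [set [set x; y] | x in V, y in V & e x y].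

Definition is_tree (W : finType) (f : rel W) : Prop :=
  [/\ simple_graph f, 0 < #|W|,
      (forall x y : W, connect f x y) &
      (forall c : seq W, 3 <= size c -> ~ ucycle f c)].

(* G contains a (not necessarily induced) copy of K_{s,s}: an injective
   map of the 2s vertices (two sides 'I_s + 'I_s) such that every vertex of
   the left side is adjacent to every vertex of the right side. *)
Definition contains_Kss (V : finType) (e : rel V) (s : nat) : Prop :=
  exists phi : 'I_s + 'I_s -> V,
    injective phi /\ forall i j : 'I_s, e (phi (inl i)) (phi (inr j)).

Definition contains_induced (V W : finType) (e : rel V) (h : rel W) : Prop :=
  exists phi : W -> V,
    injective phi /\ forall x y : W, e (phi x) (phi y) = h x y.

(* Main.v *)
Require Import Defs.
From mathcomp Require Import all_boot.
From mathcomp Require Import zify.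
Set Implicit Arguments. Unset Strict Implicit.

Section Degen.
Variables (V : finType) (e : rel V).

Definition ES (S : {set V}) : {set {set V}} :=
  [set [set x; y] | x in S, y in S & e x y].

Lemma degen (k : nat) (He : symmetric e) : forall m (S : {set V}), #|S| <= m ->
  (exists2 S' : {set V}, S' \subset S &
     (S' != set0) && [forall v in S', k < #|[set w in S' | e v w]|])
  \/ #|ES S| <= k * #|S|.
Proof.
elim=> [|m IH] S hS.
  right; have -> : S = set0 by apply/eqP; rewrite -cards_eq0; lia.
  rewrite cards0 muln0 leqn0 cards_eq0; apply/eqP/setP => z.
  rewrite inE; apply/imset2P; by case=> x y; rewrite !inE.
case: (boolP [forall v in S, k < #|[set w in S | e v w]|]) => Hall.
  case: (altP (S =P set0)) => [S0|Sn0].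
    right; rewrite S0 cards0 muln0 leqn0 cards_eq0; apply/eqP/setP => z.
    rewrite inE; apply/imset2P; by case=> x y; rewrite !inE.
  by left; exists S => //; rewrite Sn0.
case/forall_inPn: Hall => v Hv; rewrite -leqNgt => Hdeg.
have hS' : #|S :\ v| <= m by move: hS; rewrite (cardsD1 v S) Hv; lia.
case: (IH _ hS') => [[S' HS' H]|Hb].
  left; exists S' => //; apply: subset_trans HS' _; exact: subsetDl.
right.
have Hsub : ES S \subset ES (S :\ v) :|: [set [set v; w] | w in [set w in S | e v w]].
  apply/subsetP => z /imset2P[x y Hx]; rewrite inE => /andP[Hy Hxy] ->.
  rewrite inE; case: (eqVneq x v) => [Exv|Hxv].
    apply/orP; right; apply/imsetP; exists y; first by rewrite inE Hy -Exv Hxy.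
    by rewrite Exv.
  case: (eqVneq y v) => [Eyv|Hyv].
    apply/orP; right; apply/imsetP; exists x; first by rewrite inE Hx -Eyv He Hxy.
    by rewrite Eyv setUC.
  apply/orP; left; apply/imset2P; exists x y => //; first by rewrite !inE Hxv Hx.
  by rewrite !inE Hyv Hy Hxy.
apply: leq_trans (subset_leq_card Hsub) _.
apply: leq_trans (leq_card_setU _ _).1 _.
rewrite (cardsD1 v S) Hv add1n mulnSr.
apply: leq_add => //.
exact: leq_trans (leq_imset_card _ _) Hdeg.
Qed.

End Degen.

Section Embed.
Variables (W : finType) (tT : rel W) (V : finType) (e : rel V).
Hypotheses (HT : is_tree tT) (HG : simple_graph e) (HC4 : ~ contains_Kss e 2).
Variable S : {set V}.
Hypothesis HS : forall v, v \in S -> 2 * #|W| < #|[set w in S | e v w]|.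

Lemma c4 p q v1 v2 : p != q -> e p v1 -> e q v1 -> e p v2 -> e q v2 -> v1 = v2.
Proof.
move=> pq p1 q1 p2 q2; apply/eqP/negP => /negP v12; apply: HC4.
case: HG => Gsym Girr.
have ne : forall a b, e a b -> a != b.
  by move=> a b Hab; apply/eqP => E; rewrite E Girr in Hab.
have pv1 := ne _ _ p1; have pv2 := ne _ _ p2; have qv1 := ne _ _ q1; have qv2 := ne _ _ q2.
exists (fun s => match s with inl i => if val i == 0 then p else q
                   | inr i => if val i == 0 then v1 else v2 end).
split.
  move=> [[[|[|i]] Hi]|[[|[|i]] Hi]] [[[|[|j]] Hj]|[[|[|j]] Hj]] //= H;
    try (congr inl; apply: val_inj => //=);
    try (congr inr; apply: val_inj => //=);
    move/eqP: H;
    rewrite ?(negbTE pq, negbTE pv1, negbTE pv2, negbTE qv1, negbTE qv2, negbTE v12)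
            1?eq_sym ?(negbTE pq, negbTE pv1, negbTE pv2, negbTE qv1, negbTE qv2, negbTE v12) //.
by move=> [[|[|i]] Hi] [[|[|j]] Hj].
Qed.

Definition rA (A : {set W}) : rel W := [rel u v | tT u v && (u \in A) && (v \in A)].

Definition Inv (A : {set W}) (f : W -> V) :=
  [/\ {in A &, injective f}, {in A, forall a, f a \in S},
      {in A &, forall a b, e (f a) (f b) = tT a b} &
      {in A &, forall a b, connect (rA A) a b}].

Lemma path_in (A : {set W}) x q : path (rA A) x q -> all (fun z => z \in A) q.
Proof.
elim: q x => //= y q IH x /andP[/andP[/andP[_ _] Hy] Hp].
by rewrite Hy (IH y Hp).
Qed.

Lemma frontier (A : {set W}) a y : a \in A -> y \notin A ->
  exists x z, [/\ x \in A, z \notin A & tT x z].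
Proof.
case: HT => _ _ Hconn _ Ha Hy.
move/connectP: (Hconn a y) => [p Hp Hl]; rewrite Hl in Hy.
elim: p a Hp Ha Hy {Hl} => /= [|b p IH] a Hp Ha Hl.
  by rewrite Ha in Hl.
case/andP: Hp => Hab Hp.
case: (boolP (b \in A)) => Hb; first exact: (IH b).
by exists a, b.
Qed.

Lemma unique_parent (A : {set W}) x y z : x \in A -> z \in A -> y \notin A ->
  tT x y -> tT z y -> connect (rA A) x z -> z = x.
Proof.
move=> Hx Hz Hy Hxy Hzy /connectP[p Hp Hl].
case: (altP (z =P x)) => // Hzx; exfalso.
case: HT => [[Tsym Tirr] _ _ Hcyc].
move: Hl Hzx Hzy; case/shortenP: Hp => p' Hp' Hu _ Hl Hzx Hzy.
have Hall := path_in Hp'.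
apply: (Hcyc (y :: x :: p')).
  case: p' Hp' Hu Hl Hall => [|w p'] //= _ _ Hl.
  by rewrite Hl eqxx in Hzx.
rewrite /ucycle /= rcons_path; apply/andP; split.
  rewrite Tsym Hxy /=; apply/andP; split.
    by apply: sub_path Hp' => u w /andP[/andP[]].
  by rewrite -Hl.
move: Hu => /= ->; rewrite andbT inE negb_or; apply/andP; split.
  by apply/eqP => E; rewrite E Hx in Hy.
by apply/negP => Hyp; move/allP: Hall => /(_ y Hyp); rewrite (negbTE Hy).
Qed.

Lemma step (A : {set W}) f r : r \in A -> Inv A f -> A != setT ->
  exists y f', y \notin A /\ Inv (y |: A) f'.
Proof.
move=> Hr [Hinj Hmap Hadj Hconn] HA.
case: HT => [[Tsym Tirr] _ _ _].
case: HG => Gsym Girr.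
rewrite eqEsubset subsetT /= in HA; case/subsetPn: HA => y0 _ Hy0.
have [x [y [Hx Hy Hxy]]] := frontier Hr Hy0.
pose N := [set w in S | e (f x) w].
pose g a := odflt (f x) [pick w | e (f x) w && e (f a) w].
pose B := f @: A :|: g @: A.
have : ~~ (N \subset B).
  apply/negP => sub.
  have h1 := subset_leq_card sub.
  have h2 := HS (Hmap x Hx).
  have h3 := (leq_card_setU (f @: A) (g @: A)).1.
  have h4 := leq_imset_card f A.
  have h5 := leq_imset_card g A.
  have h6 := max_card (mem A).
  rewrite -/N in h2. rewrite -/B in h3.
  move: h1 h2 h3 h4 h5 h6; move: #|N| #|B| #|f @: A| #|g @: A| #|A| #|W|.
  move=> a b c d u w; lia.
case/subsetPn => v; rewrite inE => /andP[HvS Hxv] HvB.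
rewrite inE negb_or in HvB; case/andP: HvB => Hvf Hvg.
have Hna : forall a, a \in A -> a != x -> e (f a) v = false.
  move=> a Ha Hax; apply/negP => Hav.
  have Hga : g a = v.
    rewrite /g; case: pickP => [w /andP[Hxw Haw]|Hnone] /=.
      apply: (c4 (p := f x) (q := f a)) => //.
      by apply/eqP => E; move: (Hinj _ _ Hx Ha E) => E'; rewrite E' eqxx in Hax.
    by have := Hnone v; rewrite /= Hxv Hav.
  by move: Hvg; rewrite -Hga imset_f.
pose f' := fun w => if w == y then v else f w.
have Hf' : {in A, forall a, f' a = f a}.
  move=> a Ha; rewrite /f'; case: eqP => // E.
  by rewrite -E Ha in Hy.
have Hf'y : f' y = v by rewrite /f' eqxx.
have Hnt : forall b, b \in A -> b != x -> tT b y = false.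
  move=> b Hb Hbx; apply/negP => Hby.
  have := unique_parent Hx Hb Hy Hxy Hby (Hconn x b Hx Hb).
  by move=> E; rewrite E eqxx in Hbx.
exists y, f'; split => //; split.
- move=> a b; rewrite !inE => /predU1P[->|Ha] /predU1P[->|Hb] //.
  + rewrite Hf'y Hf' // => E.
    by move: Hvf; rewrite E imset_f.
  + rewrite Hf'y Hf' // => E.
    by move: Hvf; rewrite -E imset_f.
  + by rewrite !Hf' //; apply: Hinj.
- move=> a; rewrite in_setU1 => /predU1P[->|Ha]; first by rewrite Hf'y.
  by rewrite Hf' //; apply: Hmap.
- move=> a b; rewrite !inE => /predU1P[->|Ha] /predU1P[->|Hb].
  + by rewrite Hf'y Girr Tirr.
  + rewrite Hf'y Hf' //; case: (altP (b =P x)) => [->|Hbx].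
      by rewrite Gsym Hxv Tsym Hxy.
    by rewrite Gsym Hna // Tsym Hnt.
  + rewrite Hf'y Hf' //; case: (altP (a =P x)) => [->|Hax].
      by rewrite Hxv Hxy.
    by rewrite Hna // Hnt.
  + by rewrite !Hf' //; apply: Hadj.
- have mono : forall a b, connect (rA A) a b -> connect (rA (y |: A)) a b.
    move=> a b; apply: connect_sub => u w /= /andP[/andP[H1 H2] H3].
    by apply: connect1; rewrite /rA /= H1 !inE H2 H3 !orbT.
  have cyx : connect (rA (y |: A)) y x.
    by apply: connect1; rewrite /rA /= Tsym Hxy !inE eqxx Hx orbT.
  have cxy : connect (rA (y |: A)) x y.
    by apply: connect1; rewrite /rA /= Hxy !inE eqxx Hx orbT.
  move=> a b; rewrite !inE => /predU1P[->|Ha] /predU1P[->|Hb].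
  + exact: connect0.
  + exact: connect_trans cyx (mono _ _ (Hconn x b Hx Hb)).
  + exact: connect_trans (mono _ _ (Hconn a x Ha Hx)) cxy.
  + exact: mono (Hconn a b Ha Hb).
Qed.

Lemma finish (A : {set W}) f : A = setT -> Inv A f -> contains_induced e tT.
Proof.
move=> AT [Hinj _ Hadj _]; exists f; split.
  by move=> a b; apply: Hinj; rewrite AT inE.
by move=> a b; apply: Hadj; rewrite AT inE.
Qed.

Lemma grow : forall m (A : {set W}) f r, #|~: A| <= m -> r \in A -> Inv A f ->
  contains_induced e tT.
Proof.
elim=> [|m IH] A f r Hm Hr Hinv.
  apply: (finish (A := A) (f := f)) => //.
  apply/setP => w; rewrite inE; apply/negPn/negP => Hw.
  have : w \in ~: A by rewrite inE.
  by move: Hm; rewrite leqn0 cards_eq0 => /eqP ->; rewrite inE.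
case: (altP (A =P setT)) => [AT|AnT]; first exact: (finish AT Hinv).
have [y [f' [Hy Hinv']]] := step Hr Hinv AnT.
apply: (IH (y |: A) f' r) => //; last by rewrite inE Hr orbT.
have := cardsC A; have := cardsC (y |: A); rewrite cardsU1 Hy.
move: Hm; move: #|~: A| #|~: (y |: A)| #|A|; move=> a b c; lia.
Qed.
End Embed.

Lemma edge_sub (V : finType) (e : rel V) : edge_set e \subset ES e setT.
Proof.
apply/subsetP => z /imset2P[x y _]; rewrite inE => /andP[_ Hxy] ->.
by apply/imset2P; exists x y; rewrite ?inE.
Qed.

Theorem proposition3p2 (W : finType) (tT : rel W) (t : nat)
    (HT : is_tree tT) (Ht : #|W| = t)
    (n : nat) (Hn : 0 < n)
    (V : finType) (e : rel V) (HG : simple_graph e) (HV : #|V| = n)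
    (HC4 : ~ contains_Kss e 2) (HnoT : ~ contains_induced e tT) :
  #|edge_set e| <= 2 * t * n.
Proof.
rewrite leqNgt; apply/negP => Hgt.
have HG' := HG; case: HG' => Gsym Girr.
case: (degen (2 * t) Gsym (leqnn #|[set: V]|)) => [[S' _ /andP[HS0 Hall]]|Hb].
  apply: HnoT.
  have HS : forall v, v \in S' -> 2 * #|W| < #|[set w in S' | e v w]|.
    by move=> v Hv; rewrite Ht; move/forall_inP: Hall => /(_ v Hv).
  have [_ HW _ _] := HT.
  case/card_gt0P: HW => r _.
  case/set0Pn: HS0 => v0 Hv0.
  apply: (grow HT HG HC4 HS (m := #|~: [set r]|) (A := [set r]) (f := fun _ => v0) (r := r)) => //.
    by rewrite inE.
  have [[_ Tirr] _ _ _] := HT.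
  split.
  - by move=> a b; rewrite !inE => /eqP -> /eqP ->.
  - by move=> a _.
  - by move=> a b; rewrite !inE => /eqP -> /eqP ->; rewrite Girr Tirr.
  - by move=> a b; rewrite !inE => /eqP -> /eqP ->; apply: connect0.
move: Hgt; rewrite cardsT HV in Hb.
have := subset_leq_card (edge_sub e).
move: Hb; rewrite -mulnA; move: #|edge_set e| #|ES e [set: V]| => a b.
move=> H1 H2 H3; lia.
Qed.
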